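(* Let $Q$ be a square region of width (side length) $R$ and let $r$ be an awake robot positioned at the center of $Q$ which knows $Q$ and the initial positions of a set $S$ of sleeping robots whose initial positions all lie in $Q$. If no robot other than those in $\{r\}\cup S$ takes action in $Q$, then $r$ can wake up all robots of $S$ within time $5R$.
   Context: Model: robots in the Euclidean plane; sleeping robots do nothing until woken. Awake robots know the global coordinates, share a global clock, can compute, move at speed $1$ (distance $\delta$ takes time $\delta$) or wait, and exchange information only with co-located robots. An awake robot co-located with a sleeping robot can wake it up and share information with it; the woken robot then acts as an awake robot (in particular it can help wake up others). *)

(* Defs.v *)
From Stdlib Require Import Reals Lra.
Open Scope R_scope.

Definition pt : Type := (R * R)%type.

Definition dist (p q : pt) : R :=
  sqrt ((fst p - fst q) ^ 2 + (snd p - snd q) ^ 2).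

(* The closed square of side length w, centered at c, with (unit) axis
   direction u and second axis v = u rotated by 90 degrees. *)
Definition in_square (c u : pt) (w : R) (p : pt) : Prop :=
  let dx := fst p - fst c in
  let dy := snd p - snd c in
  Rabs (dx * fst u + dy * snd u) <= w / 2 /\
  Rabs (- dx * snd u + dy * fst u) <= w / 2.

(* Robots are indexed 0..n; robot 0 is the initially awake robot r,
   robots 1..n are the sleeping robots.  init i is the initial position.
   A wake-up schedule consists of:
   - traj i t : position of robot i at time t (t >= 0),
   - wake i   : the time at which robot i is woken (wake 0 = 0),
   - parent i : the robot that wakes robot i.
   Conditions: sleeping robots stay at their initial position until woken;
   every robot moves at speed at most 1; robot i (i >= 1) is woken at time
   wake i by robot parent i, which is then at init i and already awake
   (either it is r, or it was woken strictly earlier; this makes the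
   "who-woke-whom" relation well founded). *)
Record valid_schedule (n : nat) (init : nat -> pt) (traj : nat -> R -> pt)
    (wake : nat -> R) (parent : nat -> nat) : Prop := {
  vs_wake0 : wake 0%nat = 0;
  vs_wake_nonneg : forall i, (i <= n)%nat -> 0 <= wake i;
  vs_asleep : forall i t, (i <= n)%nat -> 0 <= t -> t <= wake i ->
      traj i t = init i;
  vs_speed : forall i s t, (i <= n)%nat -> 0 <= s -> 0 <= t ->
      dist (traj i s) (traj i t) <= Rabs (s - t);
  vs_parent_range : forall i, (1 <= i <= n)%nat ->
      (parent i <= n)%nat /\ parent i <> i;
  vs_parent_awake : forall i, (1 <= i <= n)%nat ->
      parent i = 0%nat \/ wake (parent i) < wake i;
  vs_parent_meet : forall i, (1 <= i <= n)%nat ->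
      traj (parent i) (wake i) = init i
}.

Definition init_of (c : pt) (pos : nat -> pt) (i : nat) : pt :=
  match i with O => c | S k => pos k end.

(* Main.v *)
Require Import Defs.
From Stdlib Require Import Reals Lra Lia Psatz List.
Import ListNotations.
Open Scope R_scope.
Local Notation dist := Defs.dist.

Lemma dist_nonneg p q : 0 <= dist p q.
Proof. unfold dist; apply sqrt_pos. Qed.

Lemma dist_sym p q : dist p q = dist q p.
Proof. unfold dist; f_equal; ring. Qed.

Lemma dist_refl p : dist p p = 0.
Proof. unfold dist. replace ((fst p - fst p) ^ 2 + (snd p - snd p) ^ 2) with 0 by ring. apply sqrt_0. Qed.

Lemma dist_eq0 p q : dist p q = 0 -> p = q.
Proof.
  unfold dist; intro H.
  assert (H0: 0 <= (fst p - fst q) ^ 2 + (snd p - snd q) ^ 2)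
    by (pose proof (pow2_ge_0 (fst p - fst q)); pose proof (pow2_ge_0 (snd p - snd q)); lra).
  apply (sqrt_eq_0 _ H0) in H.
  destruct p as [a b], q as [c d]; simpl in *.
  pose proof (pow2_ge_0 (a - c)); pose proof (pow2_ge_0 (b - d)).
  assert (a = c) by nra. assert (b = d) by nra. subst; reflexivity.
Qed.

Lemma sqrt_le_of_sq X K : X <= K^2 -> 0 <= K -> sqrt X <= K.
Proof. intros H HK. rewrite <- (sqrt_pow2 K HK). apply sqrt_le_1_alt; exact H. Qed.

Lemma norm_triangle x1 y1 x2 y2 :
  sqrt ((x1+x2)^2+(y1+y2)^2) <= sqrt (x1^2+y1^2) + sqrt (x2^2+y2^2).
Proof.
  pose proof (pow2_ge_0 x1); pose proof (pow2_ge_0 x2); pose proof (pow2_ge_0 y1); pose proof (pow2_ge_0 y2).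
  pose proof (pow2_ge_0 (x1*y2 - x2*y1)).
  assert (HA: 0 <= x1^2+y1^2) by lra. assert (HB: 0 <= x2^2+y2^2) by lra.
  set (A := x1^2+y1^2) in *. set (B := x2^2+y2^2) in *.
  pose proof (sqrt_pos A). pose proof (sqrt_pos B).
  pose proof (sqrt_sqrt A HA). pose proof (sqrt_sqrt B HB).
  apply sqrt_le_of_sq; [|lra].
  assert (HP: (sqrt A * sqrt B)^2 = A * B) by (rewrite Rpow_mult_distr; simpl; nra).
  assert (HC: (x1*x2+y1*y2)^2 <= A*B) by (unfold A, B; nra).
  assert (HQ: 0 <= sqrt A * sqrt B) by (apply Rmult_le_pos; lra).
  assert (HPQ: x1*x2+y1*y2 <= sqrt A * sqrt B).
  { rewrite <- HP in HC. clear -HC HQ. revert HC HQ.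
    generalize (x1*x2+y1*y2) (sqrt A * sqrt B). intros P Q HC HQ.
    destruct (Rle_dec P Q); auto. assert (Q < P) by lra. nra. }
  replace ((x1 + x2) ^ 2 + (y1 + y2) ^ 2) with (A + B + 2*(x1*x2+y1*y2)) by (unfold A, B; ring).
  replace ((sqrt A + sqrt B)^2) with (sqrt A * sqrt A + sqrt B * sqrt B + 2 * (sqrt A * sqrt B)) by ring.
  lra.
Qed.

Lemma dist_triangle a b c : dist a c <= dist a b + dist b c.
Proof.
  unfold dist.
  pose proof (norm_triangle (fst a - fst b) (snd a - snd b) (fst b - fst c) (snd b - snd c)).
  replace (fst a - fst c) with ((fst a - fst b) + (fst b - fst c)) by ring.
  replace (snd a - snd c) with ((snd a - snd b) + (snd b - snd c)) by ring.
  exact H.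
Qed.

Lemma dist_pos_neq p q : p <> q -> 0 < dist p q.
Proof.
  intro H. destruct (Rle_lt_or_eq_dec 0 (dist p q) (dist_nonneg p q)); auto.
  exfalso; apply H, dist_eq0; auto.
Qed.
Definition interp (a b : pt) (l : R) : pt :=
  (fst a + l * (fst b - fst a), snd a + l * (snd b - snd a)).

Fixpoint rtraj (t0 : R) (x0 : pt) (l : list pt) (tau : R) {struct l} : pt :=
  match l with
  | [] => x0
  | p :: l' =>
    if Rle_dec tau t0 then x0
    else if Rle_dec tau (t0 + dist x0 p) then interp x0 p ((tau - t0) / dist x0 p)
    else rtraj (t0 + dist x0 p) p l' tau
  end.

Definition Lip (f : R -> pt) := forall s t, dist (f s) (f t) <= Rabs (s - t).

Lemma Lip_ext f g : (forall t, f t = g t) -> Lip g -> Lip f.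
Proof. intros E H s t. rewrite !E. apply H. Qed.

Lemma Lip_const x : Lip (fun _ => x).
Proof. intros s t. rewrite dist_refl. apply Rabs_pos. Qed.

Lemma glue_Lip f g m : Lip f -> Lip g -> f m = g m ->
  Lip (fun t => if Rle_dec t m then f t else g t).
Proof.
  intros Hf Hg Hm s t.
  destruct (Rle_dec s m) as [Hs|Hs], (Rle_dec t m) as [Ht|Ht]; auto.
  - pose proof (dist_triangle (f s) (f m) (g t)).
    pose proof (Hf s m). pose proof (Hg m t). rewrite <- Hm in H1.
    revert H H0 H1. unfold Rabs; repeat destruct Rcase_abs; intros; lra.
  - pose proof (dist_triangle (g s) (g m) (f t)).
    pose proof (Hg s m). pose proof (Hf m t). rewrite Hm in H1.
    revert H H0 H1. unfold Rabs; repeat destruct Rcase_abs; intros; lra.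
Qed.

Lemma dist_interp a b l1 l2 :
  dist (interp a b l1) (interp a b l2) = Rabs (l1 - l2) * dist a b.
Proof.
  unfold dist, interp; cbn [fst snd].
  replace ((fst a + l1 * (fst b - fst a) - (fst a + l2 * (fst b - fst a))) ^ 2 +
     (snd a + l1 * (snd b - snd a) - (snd a + l2 * (snd b - snd a))) ^ 2)
    with (Rsqr (l1 - l2) * ((fst a - fst b) ^ 2 + (snd a - snd b) ^ 2)) by (unfold Rsqr; ring).
  rewrite sqrt_mult.
  - rewrite sqrt_Rsqr_abs. reflexivity.
  - apply Rle_0_sqr.
  - pose proof (pow2_ge_0 (fst a - fst b)); pose proof (pow2_ge_0 (snd a - snd b)); lra.
Qed.

Lemma interp_same a l : interp a a l = a.
Proof. destruct a; unfold interp; simpl; f_equal; ring. Qed.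

Lemma rtraj_before t0 x0 l tau : tau <= t0 -> rtraj t0 x0 l tau = x0.
Proof. intro H. destruct l; simpl; auto. destruct (Rle_dec tau t0); [auto|lra]. Qed.

Lemma rtraj_Lip l : forall t0 x0, Lip (rtraj t0 x0 l).
Proof.
  induction l as [|p l IH]; intros t0 x0.
  - apply Lip_const.
  - set (d := dist x0 p).
    set (k := fun tau => interp x0 p ((tau - t0) / d)).
    set (g := rtraj (t0 + d) p l).
    apply (Lip_ext _ (fun tau => if Rle_dec tau t0 then x0 else
                      (fun tau => if Rle_dec tau (t0 + d) then k tau else g tau) tau)).
    { intro tau. reflexivity. }
    assert (Hd: 0 <= d) by apply dist_nonneg.
    assert (Hk: Lip k).
    { intros s t. unfold k. rewrite dist_interp. fold d.
      destruct (Req_dec d 0) as [E|E].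
      - rewrite E. rewrite Rmult_0_r. apply Rabs_pos.
      - replace ((s - t0) / d - (t - t0) / d) with ((s - t) / d) by (field; auto).
        unfold Rdiv. rewrite Rabs_mult. rewrite (Rabs_right (/ d)).
        + rewrite Rmult_assoc, Rinv_l; auto. lra.
        + left. apply Rinv_0_lt_compat. lra. }
    assert (Hkend: k (t0 + d) = g (t0 + d)).
    { unfold g. rewrite rtraj_before by lra. unfold k.
      destruct (Req_dec d 0) as [E|E].
      - assert (x0 = p) by (apply dist_eq0; auto). subst p. apply interp_same.
      - replace ((t0 + d - t0) / d) with 1 by (field; auto).
        unfold interp; destruct x0, p; simpl; f_equal; ring. }
    apply glue_Lip.
    + apply Lip_const.
    + apply glue_Lip; auto. unfold g; apply IH.
    + simpl. destruct (Rle_dec t0 (t0 + d)); [|lra].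
      unfold k. replace ((t0 - t0) / d) with 0 by (unfold Rdiv; ring).
      unfold interp; destruct x0; simpl; f_equal; ring.
Qed.

Lemma rtraj_cons_after t0 x0 p l tau :
  t0 + dist x0 p <= tau -> rtraj t0 x0 (p :: l) tau = rtraj (t0 + dist x0 p) p l tau.
Proof.
  intro H. pose proof (dist_nonneg x0 p). simpl.
  destruct (Rle_dec tau t0).
  - assert (E: dist x0 p = 0) by lra. assert (x0 = p) by (apply dist_eq0; auto).
    rewrite rtraj_before by lra. auto.
  - destruct (Rle_dec tau (t0 + dist x0 p)); auto.
    assert (E: tau = t0 + dist x0 p) by lra. rewrite E.
    rewrite rtraj_before by lra.
    replace ((t0 + dist x0 p - t0) / dist x0 p) with 1 by (field; lra).
    unfold interp; destruct x0, p; simpl; f_equal; ring.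
Qed.

Lemma rtraj_head t0 x0 p l : rtraj t0 x0 (p :: l) (t0 + dist x0 p) = p.
Proof. rewrite rtraj_cons_after by lra. apply rtraj_before. lra. Qed.
Definition in_sq (c : pt) (s : R) (p : pt) : Prop :=
  fst c - s/2 <= fst p <= fst c + s/2 /\ snd c - s/2 <= snd p <= snd c + s/2.

Lemma sqrt_tangent X m : 0 <= X -> 0 < m -> sqrt X <= (X / m + m) / 2.
Proof.
  intros HX Hm. pose proof (sqrt_pos X). pose proof (sqrt_sqrt X HX).
  pose proof (pow2_ge_0 (sqrt X - m)).
  assert (sqrt X * m * 2 <= X + m * m) by nra.
  apply (Rmult_le_reg_r (2 * m)); [lra|].
  replace ((X / m + m) / 2 * (2 * m)) with (X + m * m) by (field; lra). lra.
Qed.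

Lemma crit_x s a1 a2 : 0 <= s -> 0 <= a1 <= s/2 -> -(s/2) <= a2 <= 0 ->
  a1^2 * (10000/7071) + (a1 - a2)^2 + (a2 + s/4)^2 * (10000/7906)
  <= (1/4 * (10000/7071) + 1 + 1/16 * (10000/7906)) * s^2.
Proof. intros. nra. Qed.

Lemma crit_y s b1 b2 : 0 <= s -> 0 <= b1 <= s/2 -> 0 <= b2 <= s/2 ->
  b1^2 * (10000/7071) + (b1 - b2)^2 + (b2 + s/4)^2 * (10000/7906)
  <= (1/4 * (10000/7071) + 9/16 * (10000/7906)) * s^2.
Proof. intros. nra. Qed.
Lemma crit s a1 b1 a2 b2 X1 X2 X3 : 0 <= s -> 0 <= a1 <= s/2 -> 0 <= b1 <= s/2 ->
  -(s/2) <= a2 <= 0 -> 0 <= b2 <= s/2 ->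
  X1 = a1^2 + b1^2 -> X2 = (a1 - a2)^2 + (b1 - b2)^2 ->
  X3 = (a2 + s/4)^2 + (b2 + s/4)^2 ->
  sqrt X1 + sqrt X2 + sqrt X3 <= 5/2 * s.
Proof.
  intros Hs H1 H2 H3 H4 E1 E2 E3.
  destruct (Req_dec s 0) as [Z|Z].
  - subst s. assert (a1 = 0) by lra. assert (b1 = 0) by lra. assert (a2 = 0) by lra.
    assert (b2 = 0) by lra.
    assert (Z1: X1 = 0) by (subst; ring). assert (Z2: X2 = 0) by (subst; ring).
    assert (Z3: X3 = 0) by (subst; field). rewrite Z1, Z2, Z3, sqrt_0. lra.
  - assert (Hsp: 0 < s) by lra.
    pose proof (crit_x s a1 a2 Hs H1 H3). pose proof (crit_y s b1 b2 Hs H2 H4).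
    assert (HX1: 0 <= X1) by (rewrite E1; pose proof (pow2_ge_0 a1); pose proof (pow2_ge_0 b1); lra).
    assert (HX2: 0 <= X2) by (rewrite E2; pose proof (pow2_ge_0 (a1-a2)); pose proof (pow2_ge_0 (b1-b2)); lra).
    assert (HX3: 0 <= X3) by (rewrite E3; pose proof (pow2_ge_0 (a2+s/4)); pose proof (pow2_ge_0 (b2+s/4)); lra).
    pose proof (sqrt_tangent X1 (7071/10000 * s) HX1 ltac:(lra)).
    pose proof (sqrt_tangent X2 (1 * s) HX2 ltac:(lra)).
    pose proof (sqrt_tangent X3 (7906/10000 * s) HX3 ltac:(lra)).
    set (K := X1 * (10000/7071) + X2 + X3 * (10000/7906)).
    assert (HK: K <= (1/4 * (10000/7071) + 1 + 1/16 * (10000/7906) + (1/4 * (10000/7071) + 9/16 * (10000/7906))) * s^2).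
    { unfold K. rewrite E1, E2, E3. lra. }
    assert (Hsum: (X1 / (7071/10000 * s) + 7071/10000 * s) / 2 + (X2 / (1 * s) + 1 * s) / 2
       + (X3 / (7906/10000 * s) + 7906/10000 * s) / 2 = (K / s + (7071/10000 + 1 + 7906/10000) * s) / 2).
    { unfold K. field. lra. }
    assert (HKs: K / s <= (1/4 * (10000/7071) + 1 + 1/16 * (10000/7906) + (1/4 * (10000/7071) + 9/16 * (10000/7906))) * s).
    { apply (Rmult_le_reg_r s); [lra|]. replace (K / s * s) with K by (field; lra). nra. }
    lra.
Qed.
Definition quad (c p : pt) : nat :=
  if Rle_dec (fst c) (fst p) then (if Rle_dec (snd c) (snd p) then 0%nat else 3%nat)
  else (if Rle_dec (snd c) (snd p) then 1%nat else 2%nat).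

Definition subc (c : pt) (s : R) (k : nat) : pt :=
  match k with
  | O => (fst c + s/4, snd c + s/4)
  | 1%nat => (fst c - s/4, snd c + s/4)
  | 2%nat => (fst c - s/4, snd c - s/4)
  | _ => (fst c + s/4, snd c - s/4)
  end.

Definition nx (k : nat) : nat :=
  match k with 0%nat => 1%nat | 1%nat => 2%nat | 2%nat => 3%nat | _ => 0%nat end.

Lemma quad_cases c p : quad c p = 0%nat \/ quad c p = 1%nat \/ quad c p = 2%nat \/ quad c p = 3%nat.
Proof. unfold quad; repeat destruct Rle_dec; auto. Qed.

Lemma quad_sub c s p : 0 <= s -> in_sq c s p -> in_sq (subc c s (quad c p)) (s/2) p.
Proof.
  unfold in_sq, quad; intros Hs H.
  destruct (Rle_dec (fst c) (fst p)), (Rle_dec (snd c) (snd p)); simpl; lra.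
Qed.

Lemma sub_in c s k p : 0 <= s -> in_sq (subc c s k) (s/2) p -> in_sq c s p.
Proof.
  unfold in_sq; intros Hs H.
  destruct k as [|[|[|k]]]; simpl in H; lra.
Qed.

Lemma sq_le a b : -b <= a <= b -> a^2 <= b^2.
Proof. intros. nra. Qed.

Lemma dist_center c s p : 0 <= s -> in_sq c s p -> dist c p <= 71/100 * s.
Proof.
  unfold in_sq, dist; intros Hs [Hx Hy].
  apply sqrt_le_of_sq; [|lra].
  pose proof (sq_le (fst c - fst p) (s/2) ltac:(lra)).
  pose proof (sq_le (snd c - snd p) (s/2) ltac:(lra)). nra.
Qed.

Lemma dist_diam c s p q : 0 <= s -> in_sq c s p -> in_sq c s q -> dist p q <= 142/100 * s.
Proof.
  unfold in_sq, dist; intros Hs [Hx Hy] [Hx' Hy'].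
  apply sqrt_le_of_sq; [|lra].
  pose proof (sq_le (fst p - fst q) s ltac:(lra)).
  pose proof (sq_le (snd p - snd q) s ltac:(lra)). nra.
Qed.

Lemma dist_far c s p k : 0 <= s -> in_sq c s p -> dist p (subc c s k) <= 107/100 * s.
Proof.
  intros Hs [Hx Hy]. 
  assert (Hb: forall a b, -(3/4*s) <= a <= 3/4*s -> -(3/4*s) <= b <= 3/4*s ->
    sqrt (a^2 + b^2) <= 107/100 * s).
  { intros a b Ha Hb. apply sqrt_le_of_sq; [|lra].
    pose proof (sq_le a (3/4*s) Ha). pose proof (sq_le b (3/4*s) Hb). nra. }
  unfold dist. destruct k as [|[|[|k]]]; simpl; apply Hb; lra.
Qed.
Lemma GA1 c s k q z : 0 <= s -> (k < 4)%nat ->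
  in_sq (subc c s k) (s/2) q -> in_sq (subc c s (nx k)) (s/2) z ->
  dist c q + dist q z + dist z (subc c s (nx (nx k))) <= 5/2 * s.
Proof.
  intros Hs Hk Hq Hz.
  destruct k as [|[|[|[|k]]]]; [| | | |lia]; unfold in_sq, dist in *; simpl in *.
  - apply (crit s (fst q - fst c) (snd q - snd c) (fst z - fst c) (snd z - snd c)); try lra; ring.
  - apply (crit s (snd q - snd c) (fst c - fst q) (snd z - snd c) (fst c - fst z)); try lra; field.
  - apply (crit s (fst c - fst q) (snd c - snd q) (fst c - fst z) (snd c - snd z)); try lra; field.
  - apply (crit s (snd c - snd q) (fst q - fst c) (snd c - snd z) (fst z - fst c)); try lra; field.
Qed.

Lemma GA2 c s k a q z : 0 <= s ->
  in_sq (subc c s k) (s/2) q -> in_sq (subc c s a) (s/2) z ->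
  dist c q + dist q z + dist z (subc c s a) <= 5/2 * s.
Proof.
  intros Hs Hq Hz.
  pose proof (dist_center c s q Hs (sub_in _ _ _ _ Hs Hq)).
  pose proof (dist_diam c s q z Hs (sub_in _ _ _ _ Hs Hq) (sub_in _ _ _ _ Hs Hz)).
  pose proof (dist_center (subc c s a) (s/2) z ltac:(lra) Hz). rewrite dist_sym in H1.
  lra.
Qed.

Lemma GA3 c s k b q : 0 <= s -> in_sq (subc c s k) (s/2) q ->
  dist c q + dist q (subc c s b) <= 5/2 * s.
Proof.
  intros Hs Hq.
  pose proof (dist_center c s q Hs (sub_in _ _ _ _ Hs Hq)).
  pose proof (dist_far c s q b Hs (sub_in _ _ _ _ Hs Hq)). lra.
Qed.

Lemma GB1 c s k b q z : 0 <= s ->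
  in_sq (subc c s k) (s/2) q -> in_sq (subc c s k) (s/2) z ->
  dist c q + dist q z + dist z (subc c s b) <= 5/2 * s.
Proof.
  intros Hs Hq Hz.
  pose proof (dist_center c s q Hs (sub_in _ _ _ _ Hs Hq)).
  pose proof (dist_diam (subc c s k) (s/2) q z ltac:(lra) Hq Hz).
  pose proof (dist_far c s z b Hs (sub_in _ _ _ _ Hs Hz)). lra.
Qed.
Definition pteqb (p q : pt) : bool :=
  if Req_EM_T (fst p) (fst q) then (if Req_EM_T (snd p) (snd q) then true else false) else false.

Lemma pteqb_spec p q : pteqb p q = true <-> p = q.
Proof.
  unfold pteqb; destruct p as [a b], q as [c d]; simpl.
  destruct (Req_EM_T a c), (Req_EM_T b d); subst; split; intro H; auto; try discriminate;
  inversion H; contradiction.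
Qed.

Record Out := mkOut { cont : list pt; wk : nat -> R; par : nat -> nat; rt : nat -> list pt }.
Definition emptyOut := mkOut [] (fun _ => 0) (fun _ => 0%nat) (fun _ => []).

Definition step (init : nat -> pt) (y : nat) (x : pt) (t : R) (p : nat)
  (W L1 L2 : list nat) (o1 o2 : Out) : Out :=
  mkOut (init p :: cont o1)
   (fun j => if in_dec Nat.eq_dec j W then t + dist x (init p)
             else if in_dec Nat.eq_dec j L1 then wk o1 j else wk o2 j)
   (fun j => if in_dec Nat.eq_dec j W then y
             else if in_dec Nat.eq_dec j L1 then par o1 j else par o2 j)
   (fun j => if Nat.eq_dec j p then cont o2 else if in_dec Nat.eq_dec j W then []
             else if in_dec Nat.eq_dec j L1 then rt o1 j else rt o2 j).

Definition posi (init : nat -> pt) (o : Out) (r : nat) (x : pt) (t : R) (i : nat) (tau : R) : pt :=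
  if Nat.eq_dec i r then rtraj t x (cont o) tau else rtraj (wk o i) (init i) (rt o i) tau.

Definition Good (init : nat -> pt) (o : Out) (r : nat) (x : pt) (t : R) (L : list nat) (B : R) : Prop :=
  forall j, In j L ->
    t < wk o j /\ wk o j <= B /\
    (par o j = r \/ (In (par o j) L /\ wk o (par o j) < wk o j)) /\
    posi init o r x t (par o j) (wk o j) = init j.

Lemma Good_weaken init o r x t L B B' : B <= B' -> Good init o r x t L B -> Good init o r x t L B'.
Proof. intros HB H j Hj. destruct (H j Hj) as (?&?&?&?). repeat split; auto; lra. Qed.

Lemma step_good init y x t p W L1 L2 o1 o2 L B :
  In p W -> (forall j, In j W -> init j = init p) -> init p <> x ->
  Good init o1 y (init p) (t + dist x (init p)) L1 B ->
  Good init o2 p (init p) (t + dist x (init p)) L2 B ->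
  t + dist x (init p) <= B ->
  (forall j, In j L1 -> ~ In j W) -> (forall j, In j L2 -> ~ In j W) ->
  (forall j, In j L1 -> ~ In j L2) ->
  (forall j, In j W \/ In j L1 \/ In j L2 -> j <> y) ->
  (forall j, In j L <-> In j W \/ In j L1 \/ In j L2) ->
  Good init (step init y x t p W L1 L2 o1 o2) y x t L B.
Proof.
  intros HpW HW Hpx G1 G2 HtB D1 D2 D12 Dy HL j Hj.
  set (t1 := t + dist x (init p)) in *.
  assert (Ht1: t < t1) by (unfold t1; pose proof (dist_pos_neq x (init p)); 
                           assert (x <> init p) by auto; pose proof (H H0); lra).
  assert (Hpy: p <> y) by (apply Dy; auto).
  assert (Hp1: ~ In p L1) by (intro H; exact (D1 p H HpW)).
  assert (Hp2: ~ In p L2) by (intro H; exact (D2 p H HpW)).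
  apply HL in Hj. unfold posi, step; cbn [wk par rt cont]. fold t1.
  destruct (in_dec Nat.eq_dec j W) as [HjW|HjW].
  - repeat split; try lra.
    + left; auto.
    + destruct (Nat.eq_dec y y); [|congruence]. fold t1. unfold t1. rewrite rtraj_head.
      symmetry; apply HW; auto.
  - destruct (in_dec Nat.eq_dec j L1) as [Hj1|Hj1].
    + destruct (G1 j Hj1) as (A1 & A2 & A3 & A4). unfold posi in A4.
      repeat split; try lra.
      * destruct A3 as [A3|[A3 A3']]; [left; auto|right].
        split; [apply HL; auto|].
        destruct (in_dec Nat.eq_dec (par o1 j) W) as [Hw|Hw]; [exfalso; exact (D1 _ A3 Hw)|].
        destruct (in_dec Nat.eq_dec (par o1 j) L1); [auto|contradiction].
      * destruct (Nat.eq_dec (par o1 j) y) as [E|E].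
        -- rewrite rtraj_cons_after by (fold t1; lra). exact A4.
        -- destruct A3 as [A3|[A3 A3']]; [contradiction|].
           destruct (in_dec Nat.eq_dec (par o1 j) W) as [Hw|Hw]; [exfalso; exact (D1 _ A3 Hw)|].
           destruct (in_dec Nat.eq_dec (par o1 j) L1) as [_|Hn]; [|contradiction].
           destruct (Nat.eq_dec (par o1 j) p) as [Ep|Ep]; [rewrite Ep in A3; contradiction|].
           exact A4.
    + assert (Hj2: In j L2) by tauto.
      destruct (G2 j Hj2) as (A1 & A2 & A3 & A4). unfold posi in A4.
      repeat split; try lra.
      * right. destruct A3 as [A3|[A3 A3']].
        -- rewrite A3. split; [apply HL; auto|].
           destruct (in_dec Nat.eq_dec p W); [|contradiction]. fold t1. lra.
        -- split; [apply HL; auto|].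
           destruct (in_dec Nat.eq_dec (par o2 j) W) as [Hw|Hw]; [exfalso; exact (D2 _ A3 Hw)|].
           destruct (in_dec Nat.eq_dec (par o2 j) L1) as [Hl|Hl]; [exfalso; exact (D12 _ Hl A3)|].
           auto.
      * destruct A3 as [A3|[A3 A3']].
        -- rewrite A3 in *. destruct (Nat.eq_dec p y); [contradiction|].
           destruct (in_dec Nat.eq_dec p W); [|contradiction].
           destruct (Nat.eq_dec p p); [|congruence]. destruct (Nat.eq_dec p p) in A4; [|congruence].
           fold t1. exact A4.
        -- assert (Hny: par o2 j <> y) by (apply Dy; auto).
           destruct (Nat.eq_dec (par o2 j) y); [contradiction|].
           destruct (in_dec Nat.eq_dec (par o2 j) W) as [Hw|Hw]; [exfalso; exact (D2 _ A3 Hw)|].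
           destruct (in_dec Nat.eq_dec (par o2 j) L1) as [Hl|Hl]; [exfalso; exact (D12 _ Hl A3)|].
           destruct (Nat.eq_dec (par o2 j) p) as [Ep|Ep]; [rewrite Ep in A3; contradiction|].
           exact A4.
Qed.
Definition pairh (init : nat -> pt) (sv : pt -> R -> nat -> pt -> R -> list nat -> Out)
  (c : pt) (s : R) (y : nat) (q : pt) (t : R) (La : list nat) (a : nat) (Lb : list nat) (b : nat) : Out :=
  match La with
  | [] => sv (subc c s b) (s/2) y q t Lb
  | pa :: _ =>
    let qa := init pa in
    let t2 := t + dist q qa in
    let Wa := filter (fun j => pteqb (init j) qa) La in
    let La' := filter (fun j => negb (pteqb (init j) qa)) La in
    step init y q t pa Wa La' Lb (sv (subc c s a) (s/2) y qa t2 La') (sv (subc c s b) (s/2) pa qa t2 Lb)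
  end.

Fixpoint solve (init : nat -> pt) (fuel : nat) (c : pt) (s : R) (r : nat) (x : pt) (t : R)
  (L : list nat) {struct fuel} : Out :=
  match fuel with
  | O => emptyOut
  | S f =>
    match L with
    | [] => emptyOut
    | p1 :: _ =>
      let q := init p1 in
      let t1 := t + dist x q in
      let k := quad c q in
      let LQ := fun i => filter (fun j => Nat.eqb (quad c (init j)) i) L in
      let W := filter (fun j => pteqb (init j) q) L in
      let Lk' := filter (fun j => andb (Nat.eqb (quad c (init j)) k) (negb (pteqb (init j) q))) L in
      let oA := pairh init (solve init f) c s p1 q t1 (LQ (nx k)) (nx k) (LQ (nx (nx k))) (nx (nx k)) in
      let oB := pairh init (solve init f) c s r q t1 Lk' k (LQ (nx (nx (nx k)))) (nx (nx (nx k))) in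
      step init r x t p1 W (Lk' ++ LQ (nx (nx (nx k)))) (LQ (nx k) ++ LQ (nx (nx k))) oB oA
    end
  end.

Definition Pre (init : nat -> pt) (c : pt) (s : R) (r : nat) (x : pt) (L : list nat) : Prop :=
  0 <= s /\ (forall j, In j L -> in_sq c s (init j) /\ init j <> x /\ j <> r).

Definition SolveOK (init : nat -> pt) (f : nat) : Prop :=
  forall c s r x t L, Pre init c s r x L -> (length L <= f)%nat ->
    Good init (solve init f c s r x t L) r x t L (t + dist x c + 5 * s).

Lemma pairh_good init f c s y q t La a Lb b B :
  SolveOK init f -> 0 <= s ->
  (forall j, In j La -> in_sq (subc c s a) (s/2) (init j)) ->
  (forall j, In j Lb -> in_sq (subc c s b) (s/2) (init j)) ->
  (forall j j', In j La -> In j' Lb -> init j <> init j') ->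
  (forall j, In j (La ++ Lb) -> init j <> q /\ j <> y) ->
  (length La <= f)%nat -> (length Lb <= f)%nat ->
  (forall z, in_sq (subc c s a) (s/2) z -> t + dist q z + dist z (subc c s a) + 5*(s/2) <= B) ->
  (forall z, in_sq (subc c s a) (s/2) z -> t + dist q z + dist z (subc c s b) + 5*(s/2) <= B) ->
  t + dist q (subc c s b) + 5*(s/2) <= B ->
  Good init (pairh init (solve init f) c s y q t La a Lb b) y q t (La ++ Lb) B.
Proof.
  intros IH Hs Ha Hb Dab Dq Hla Hlb B1 B2 B3.
  destruct La as [|pa La0].
  - simpl. apply Good_weaken with (B := t + dist q (subc c s b) + 5*(s/2)); [lra|].
    apply IH; auto. split; [lra|]. intros j Hj. split; [auto|]. apply Dq. auto.
  - set (La := pa :: La0) in *.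
    assert (HpaLa: In pa La) by (unfold La; simpl; auto).
    unfold pairh. cbv zeta. fold La.
    set (qa := init pa).
    set (Wa := filter (fun j => pteqb (init j) qa) La).
    set (La' := filter (fun j => negb (pteqb (init j) qa)) La).
    assert (InWa: forall j, In j Wa <-> In j La /\ init j = qa).
    { intro j. unfold Wa. rewrite filter_In, pteqb_spec. tauto. }
    assert (InLa': forall j, In j La' <-> In j La /\ init j <> qa).
    { intro j. unfold La'. rewrite filter_In. split.
      - intros [H1 H2]. split; auto. intro E. apply pteqb_spec in E. rewrite E in H2. discriminate.
      - intros [H1 H2]. split; auto. destruct (pteqb (init j) qa) eqn:E; auto.
        apply pteqb_spec in E. contradiction. }
    assert (Hsq: in_sq (subc c s a) (s/2) qa) by (apply Ha; auto).
    pose proof (B1 qa Hsq) as K1. pose proof (B2 qa Hsq) as K2.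
    pose proof (dist_nonneg qa (subc c s a)) as K3.
    apply step_good; change (init pa) with qa; fold Wa; fold La'.
    + apply InWa. split; auto.
    + intros j Hj. apply InWa in Hj. tauto.
    + intro E. destruct (Dq pa ltac:(apply in_or_app; auto)) as [H' _]. exact (H' E).
    + apply Good_weaken with (B := t + dist q qa + dist qa (subc c s a) + 5 * (s/2)); [lra|].
      apply IH.
      * split; [lra|]. intros j Hj. apply InLa' in Hj. destruct Hj as [Hj1 Hj2].
        split; [auto|]. split; [auto|]. apply Dq. apply in_or_app; auto.
      * eapply Nat.le_trans; [apply filter_length_le|]. auto.
    + apply Good_weaken with (B := t + dist q qa + dist qa (subc c s b) + 5 * (s/2)); [lra|].
      apply IH.
      * split; [lra|]. intros j Hj. split; [auto|]. split.
        -- intro E. apply (Dab pa j); auto.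
        -- intro E. subst j. apply (Dab pa pa); auto.
      * auto.
    + lra.
    + intros j H1 H2. apply InLa' in H1. apply InWa in H2. tauto.
    + intros j H1 H2. apply InWa in H2. destruct H2. apply (Dab j j); auto.
    + intros j H1 H2. apply InLa' in H1. destruct H1. apply (Dab j j); auto.
    + intros j [H|[H|H]]; apply Dq; apply in_or_app.
      * apply InWa in H. tauto.
      * apply InLa' in H. tauto.
      * auto.
    + intro j. rewrite in_app_iff, InWa, InLa'. split.
      * intros [H|H]; auto. destruct (pteqb (init j) qa) eqn:E.
        -- apply pteqb_spec in E. auto.
        -- right; left. split; auto. intro E'. apply pteqb_spec in E'. congruence.
      * intros [H|[H|H]]; tauto.
Qed.
Lemma nx_facts k : (k < 4)%nat -> nx k <> k /\ nx (nx k) <> k /\ nx (nx (nx k)) <> k /\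
  nx (nx k) <> nx k /\ nx (nx (nx k)) <> nx k /\ nx (nx (nx k)) <> nx (nx k).
Proof. intro H. destruct k as [|[|[|[|k]]]]; simpl; try lia; repeat split; discriminate. Qed.

Lemma nx_cover k v : (k < 4)%nat -> (v < 4)%nat ->
  v = k \/ v = nx k \/ v = nx (nx k) \/ v = nx (nx (nx k)).
Proof.
  intros H1 H2. destruct k as [|[|[|[|k]]]]; destruct v as [|[|[|[|v]]]]; simpl; try lia; tauto.
Qed.

Lemma quad_lt4 c p : (quad c p < 4)%nat.
Proof. destruct (quad_cases c p) as [E|[E|[E|E]]]; rewrite E; lia. Qed.

Lemma filter_head_false (g : nat -> bool) p1 rest : g p1 = false ->
  (length (filter g (p1 :: rest)) <= length rest)%nat.
Proof. intro H. simpl. rewrite H. apply filter_length_le. Qed.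

Lemma solve_cons init f c s r x t p1 rest :
  solve init (S f) c s r x t (p1 :: rest) =
  (let L := p1 :: rest in
   let q := init p1 in
      let t1 := t + dist x q in
      let k := quad c q in
      let LQ := fun i => filter (fun j => Nat.eqb (quad c (init j)) i) L in
      let W := filter (fun j => pteqb (init j) q) L in
      let Lk' := filter (fun j => andb (Nat.eqb (quad c (init j)) k) (negb (pteqb (init j) q))) L in
      let oA := pairh init (solve init f) c s p1 q t1 (LQ (nx k)) (nx k) (LQ (nx (nx k))) (nx (nx k)) in
      let oB := pairh init (solve init f) c s r q t1 Lk' k (LQ (nx (nx (nx k)))) (nx (nx (nx k))) in
      step init r x t p1 W (Lk' ++ LQ (nx (nx (nx k)))) (LQ (nx k) ++ LQ (nx (nx k))) oB oA).
Proof. reflexivity. Qed.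

Lemma solve_ok init f : SolveOK init f.
Proof.
  induction f as [|f IH]; intros c s r x t L HP Hlen.
  - destruct L; [intros j Hj; destruct Hj|simpl in Hlen; lia].
  - destruct L as [|p1 rest]; [intros j Hj; destruct Hj|].
    rewrite solve_cons. cbv zeta.
    destruct HP as [Hs HPL].
    set (L := p1 :: rest) in *.
    set (q := init p1).
    set (k := quad c q).
    set (t1 := t + dist x q).
    set (LQ := fun i => filter (fun j => Nat.eqb (quad c (init j)) i) L).
    set (W := filter (fun j => pteqb (init j) q) L).
    set (Lk' := filter (fun j => andb (Nat.eqb (quad c (init j)) k) (negb (pteqb (init j) q))) L).
    change (filter (fun j => Nat.eqb (quad c (init j)) (nx k)) L) with (LQ (nx k)).
    change (filter (fun j => Nat.eqb (quad c (init j)) (nx (nx k))) L) with (LQ (nx (nx k))).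
    change (filter (fun j => Nat.eqb (quad c (init j)) (nx (nx (nx k)))) L) with (LQ (nx (nx (nx k)))).
    assert (Hp1L: In p1 L) by (unfold L; simpl; auto).
    assert (Hk4: (k < 4)%nat) by apply quad_lt4.
    destruct (nx_facts k Hk4) as (N1 & N2 & N3 & N4 & N5 & N6).
    assert (InLQ: forall i j, In j (LQ i) <-> In j L /\ quad c (init j) = i).
    { intros i j. unfold LQ. rewrite filter_In, Nat.eqb_eq. tauto. }
    assert (InW: forall j, In j W <-> In j L /\ init j = q).
    { intro j. unfold W. rewrite filter_In, pteqb_spec. tauto. }
    assert (InLk: forall j, In j Lk' <-> In j L /\ quad c (init j) = k /\ init j <> q).
    { intro j. unfold Lk'. rewrite filter_In, Bool.andb_true_iff, Nat.eqb_eq, Bool.negb_true_iff.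
      split.
      - intros [H1 [H2 H3]]. repeat split; auto. intro E. apply pteqb_spec in E. congruence.
      - intros [H1 [H2 H3]]. repeat split; auto. destruct (pteqb (init j) q) eqn:E; auto.
        apply pteqb_spec in E. contradiction. }
    assert (Hsub: forall j, In j L -> in_sq (subc c s (quad c (init j))) (s/2) (init j)).
    { intros j Hj. apply quad_sub; auto. apply HPL; auto. }
    assert (Hq: in_sq (subc c s k) (s/2) q) by (apply Hsub; auto).
    assert (Hqin: in_sq c s q) by (apply HPL; auto).
    assert (Hlr: (length rest <= f)%nat) by (unfold L in Hlen; simpl in Hlen; lia).
    assert (HlenLQ: forall i, i <> k -> (length (LQ i) <= f)%nat).
    { intros i Hi. eapply Nat.le_trans; [|exact Hlr]. unfold LQ, L. apply filter_head_false.
      apply Nat.eqb_neq. fold q. fold k. auto. }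
    assert (Htri: dist x q <= dist x c + dist c q) by apply dist_triangle.
    pose proof (dist_center c s q Hs Hqin) as Hcq.
    assert (Hqk: forall j, In j L -> init j = q -> quad c (init j) = k).
    { intros j _ E. rewrite E. reflexivity. }
    apply step_good.
    + apply InW; split; auto.
    + intros j Hj. apply InW in Hj. destruct Hj as [_ E]. rewrite E. reflexivity.
    + apply HPL; auto.
    +
      fold q. fold t1.
      apply pairh_good; [exact IH|exact Hs|..].
      * intros j Hj. apply InLk in Hj. destruct Hj as (H1 & H2 & H3). rewrite <- H2. auto.
      * intros j Hj. apply InLQ in Hj. destruct Hj as (H1 & H2). rewrite <- H2. auto.
      * intros j j' H1 H2 E. apply InLk in H1. apply InLQ in H2.
        destruct H1 as (_ & H1 & _). destruct H2 as (_ & H2). rewrite E in H1. congruence.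
      * intros j Hj. apply in_app_or in Hj. destruct Hj as [Hj|Hj].
        -- apply InLk in Hj. destruct Hj as (H1 & H2 & H3). split; auto. apply HPL; auto.
        -- apply InLQ in Hj. destruct Hj as (H1 & H2). split.
           ++ intro E. rewrite E in H2. fold k in H2. auto.
           ++ apply HPL; auto.
      * eapply Nat.le_trans; [|exact Hlr]. unfold Lk', L. apply filter_head_false.
        fold q. destruct (pteqb q q) eqn:E.
        -- rewrite Bool.andb_false_r. reflexivity.
        -- exfalso. assert (q = q) as E' by reflexivity. apply pteqb_spec in E'. congruence.
      * apply HlenLQ. auto.
      * intros z Hz. pose proof (GB1 c s k k q z Hs Hq Hz). unfold t1. lra.
      * intros z Hz. pose proof (GB1 c s k (nx (nx (nx k))) q z Hs Hq Hz). unfold t1. lra.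
      * pose proof (GA3 c s k (nx (nx (nx k))) q Hs Hq). unfold t1. lra.
    +
      fold q. fold t1.
      apply pairh_good; [exact IH|exact Hs|..].
      * intros j Hj. apply InLQ in Hj. destruct Hj as (H1 & H2). rewrite <- H2. auto.
      * intros j Hj. apply InLQ in Hj. destruct Hj as (H1 & H2). rewrite <- H2. auto.
      * intros j j' H1 H2 E. apply InLQ in H1. apply InLQ in H2.
        destruct H1 as (_ & H1). destruct H2 as (_ & H2). rewrite E in H1. congruence.
      * intros j Hj. apply in_app_or in Hj.
        assert (HH: In j L /\ quad c (init j) <> k).
        { destruct Hj as [Hj|Hj]; apply InLQ in Hj; destruct Hj as (H1 & H2); split; auto;
          rewrite H2; auto. }
        destruct HH as [H1 H2]. split.
        -- intro E. apply H2. rewrite E. reflexivity.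
        -- intro E. subst j. apply H2. reflexivity.
      * apply HlenLQ. auto.
      * apply HlenLQ. auto.
      * intros z Hz. pose proof (GA2 c s k (nx k) q z Hs Hq Hz). unfold t1. lra.
      * intros z Hz. pose proof (GA1 c s k q z Hs Hk4 Hq Hz). unfold t1. lra.
      * pose proof (GA3 c s k (nx (nx k)) q Hs Hq). unfold t1. lra.
    + fold q. lra.
    + intros j H1 H2. apply InW in H2. destruct H2 as [_ E]. apply in_app_or in H1.
      destruct H1 as [H1|H1].
      * apply InLk in H1. tauto.
      * apply InLQ in H1. destruct H1 as [_ H1]. rewrite E in H1. fold k in H1. auto.
    + intros j H1 H2. apply InW in H2. destruct H2 as [_ E]. apply in_app_or in H1.
      destruct H1 as [H1|H1]; apply InLQ in H1; destruct H1 as [_ H1]; rewrite E in H1;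
        fold k in H1; auto.
    + intros j H1 H2. apply in_app_or in H1. apply in_app_or in H2.
      destruct H1 as [H1|H1]; [apply InLk in H1; destruct H1 as (_ & H1 & _)
                              |apply InLQ in H1; destruct H1 as (_ & H1)];
      (destruct H2 as [H2|H2]; apply InLQ in H2; destruct H2 as (_ & H2)); congruence.
    + intros j Hj. assert (In j L).
      { destruct Hj as [Hj|[Hj|Hj]].
        - apply InW in Hj; tauto.
        - apply in_app_or in Hj. destruct Hj as [Hj|Hj]; [apply InLk in Hj|apply InLQ in Hj]; tauto.
        - apply in_app_or in Hj. destruct Hj as [Hj|Hj]; apply InLQ in Hj; tauto. }
      apply HPL; auto.
    + intro j. split.
      * intro Hj. destruct (pteqb (init j) q) eqn:E.
        -- left. apply InW. split; auto. apply pteqb_spec; auto.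
        -- assert (Hne: init j <> q) by (intro E'; apply pteqb_spec in E'; congruence).
           right. destruct (nx_cover k (quad c (init j)) Hk4 (quad_lt4 c (init j))) as [V|[V|[V|V]]].
           ++ left. apply in_or_app. left. apply InLk. auto.
           ++ right. apply in_or_app. left. apply InLQ. auto.
           ++ right. apply in_or_app. right. apply InLQ. auto.
           ++ left. apply in_or_app. right. apply InLQ. auto.
      * intros [Hj|[Hj|Hj]].
        -- apply InW in Hj; tauto.
        -- apply in_app_or in Hj. destruct Hj as [Hj|Hj]; [apply InLk in Hj|apply InLQ in Hj]; tauto.
        -- apply in_app_or in Hj. destruct Hj as [Hj|Hj]; apply InLQ in Hj; tauto.
Qed.
Lemma canon (w : R) (n : nat) (init : nat -> pt) :
  0 <= w -> init 0%nat = (0, 0) ->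
  (forall j, (1 <= j <= n)%nat -> in_sq (0, 0) w (init j)) ->
  exists (traj : nat -> R -> pt) (wake : nat -> R) (parent : nat -> nat),
    valid_schedule n init traj wake parent /\ (forall i, (i <= n)%nat -> wake i <= 5 * w).
Proof.
  intros Hw H0 Hin.
  set (c0 := (0, 0) : pt).
  set (L := filter (fun j => negb (pteqb (init j) c0)) (seq 1 n)).
  set (o := solve init (length L) c0 w 0%nat c0 0 L).
  assert (InL: forall j, In j L <-> ((1 <= j <= n)%nat /\ init j <> c0)).
  { intro j. unfold L. rewrite filter_In, in_seq, Bool.negb_true_iff. split.
    - intros [H1 H2]. split; [lia|]. intro E. apply pteqb_spec in E. congruence.
    - intros [H1 H2]. split; [lia|]. destruct (pteqb (init j) c0) eqn:E; auto.
      apply pteqb_spec in E. contradiction. }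
  assert (G: Good init o 0%nat c0 0 L (0 + dist c0 c0 + 5 * w)).
  { apply solve_ok; [|lia]. split; auto. intros j Hj. apply InL in Hj.
    destruct Hj as [H1 H2]. split; [apply Hin; auto|]. split; auto. lia. }
  rewrite dist_refl in G.
  exists (fun j tau => if Nat.eq_dec j 0 then rtraj 0 c0 (cont o) tau
                  else if in_dec Nat.eq_dec j L then rtraj (wk o j) (init j) (rt o j) tau
                  else init j).
  exists (fun j => if Nat.eq_dec j 0 then 0 else if in_dec Nat.eq_dec j L then wk o j else 0).
  exists (fun j => if in_dec Nat.eq_dec j L then par o j else 0%nat).
  assert (HL0: ~ In 0%nat L) by (intro H; apply InL in H; lia).
  assert (Hpos: forall i tau, (i = 0%nat \/ In i L) ->
    posi init o 0%nat c0 0 i tau =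
    (if Nat.eq_dec i 0 then rtraj 0 c0 (cont o) tau
     else if in_dec Nat.eq_dec i L then rtraj (wk o i) (init i) (rt o i) tau else init i)).
  { intros i tau Hi. unfold posi. destruct (Nat.eq_dec i 0); auto.
    destruct (in_dec Nat.eq_dec i L); auto. destruct Hi; [contradiction|contradiction]. }
  split; [split|].
  - simpl. reflexivity.
  - intros i Hi. destruct (Nat.eq_dec i 0); [lra|]. destruct (in_dec Nat.eq_dec i L); [|lra].
    destruct (G i i0) as (A1 & _). lra.
  - intros i t Hi Ht Hle. destruct (Nat.eq_dec i 0) as [E|E].
    + subst. rewrite rtraj_before by lra. auto.
    + destruct (in_dec Nat.eq_dec i L); auto. apply rtraj_before; auto.
  - intros i s t Hi Hs Ht. destruct (Nat.eq_dec i 0).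
    + apply rtraj_Lip.
    + destruct (in_dec Nat.eq_dec i L).
      * apply rtraj_Lip.
      * apply Lip_const.
  - intros i Hi. destruct (in_dec Nat.eq_dec i L) as [Hi'|Hi'].
    + destruct (G i Hi') as (_ & _ & A3 & _). destruct A3 as [A3|[A3 A4]].
      * rewrite A3. split; lia.
      * split; [apply InL in A3; lia|]. intro E. rewrite E in A4. lra.
    + split; lia.
  - intros i Hi. destruct (in_dec Nat.eq_dec i L) as [Hi'|Hi'].
    + destruct (G i Hi') as (_ & _ & A3 & _). destruct A3 as [A3|[A3 A4]]; [left; auto|right].
      destruct (Nat.eq_dec (par o i) 0) as [E|E]; [rewrite E in A3; contradiction|].
      destruct (in_dec Nat.eq_dec (par o i) L); [|contradiction].
      destruct (Nat.eq_dec i 0); [lia|]. auto.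
    + left; auto.
  - intros i Hi. destruct (in_dec Nat.eq_dec i L) as [Hi'|Hi'].
    + destruct (G i Hi') as (_ & _ & A3 & A4).
      destruct (Nat.eq_dec i 0); [lia|].
      destruct (in_dec Nat.eq_dec i L); [|contradiction].
      rewrite <- Hpos; auto. destruct A3 as [A3|[A3 _]]; auto.
    + destruct (Nat.eq_dec 0 0); [|congruence]. destruct (Nat.eq_dec i 0); [lia|].
      rewrite rtraj_before by lra.
      assert (init i = c0).
      { destruct (pteqb (init i) c0) eqn:E; [apply pteqb_spec; auto|].
        exfalso. apply Hi'. apply InL. split; auto. intro E'. apply pteqb_spec in E'. congruence. }
      auto.
  - intros i Hi. destruct (Nat.eq_dec i 0); [lra|].
    destruct (in_dec Nat.eq_dec i L) as [Hi'|Hi']; [|lra].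
    destruct (G i Hi') as (_ & A2 & _). lra.
Qed.
Definition frG (c u : pt) (p : pt) : pt :=
  ((fst p - fst c) * fst u + (snd p - snd c) * snd u,
   - (fst p - fst c) * snd u + (snd p - snd c) * fst u).

Definition frF (c u : pt) (p : pt) : pt :=
  (fst c + fst p * fst u - snd p * snd u, snd c + fst p * snd u + snd p * fst u).

Lemma frFG c u p : fst u ^ 2 + snd u ^ 2 = 1 -> frF c u (frG c u p) = p.
Proof.
  intro H. destruct p as [a b], c as [c1 c2], u as [u1 u2]; unfold frF, frG; cbn [fst snd] in *.
  f_equal.
  - replace (c1 + ((a - c1) * u1 + (b - c2) * u2) * u1 - (- (a - c1) * u2 + (b - c2) * u1) * u2)
      with (c1 + (a - c1) * (u1^2 + u2^2)) by ring. rewrite H. ring.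
  - replace (c2 + ((a - c1) * u1 + (b - c2) * u2) * u2 + (- (a - c1) * u2 + (b - c2) * u1) * u1)
      with (c2 + (b - c2) * (u1^2 + u2^2)) by ring. rewrite H. ring.
Qed.

Lemma frF_dist c u a b : fst u ^ 2 + snd u ^ 2 = 1 -> dist (frF c u a) (frF c u b) = dist a b.
Proof.
  intro H. unfold dist, frF; cbn [fst snd]. f_equal.
  replace ((fst c + fst a * fst u - snd a * snd u - (fst c + fst b * fst u - snd b * snd u)) ^ 2 +
   (snd c + fst a * snd u + snd a * fst u - (snd c + fst b * snd u + snd b * fst u)) ^ 2)
   with (((fst a - fst b) ^ 2 + (snd a - snd b) ^ 2) * (fst u ^ 2 + snd u ^ 2)) by ring.
  rewrite H. ring.
Qed.

Theorem lemma3 (w : R) (c u : pt) (n : nat) (pos : nat -> pt) :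
  0 <= w ->
  fst u ^ 2 + snd u ^ 2 = 1 ->
  (forall k, (k < n)%nat -> in_square c u w (pos k)) ->
  exists (traj : nat -> R -> pt) (wake : nat -> R) (parent : nat -> nat),
    valid_schedule n (init_of c pos) traj wake parent /\
    (forall i, (i <= n)%nat -> wake i <= 5 * w).
Proof.
  intros Hw Hu Hpos.
  set (init := fun j => frG c u (init_of c pos j)).
  destruct (canon w n init Hw) as (tr & wake & parent & [V1 V2 V3 V4 V5 V6 V7] & Hb).
  - unfold init, frG; simpl. f_equal; ring.
  - intros j Hj. unfold init. destruct j as [|k]; [lia|]. simpl.
    destruct (Hpos k ltac:(lia)) as [Ha Hb]. unfold in_sq, frG; simpl.
    revert Ha Hb. unfold Rabs. repeat destruct Rcase_abs; intros; lra.
  - exists (fun j tau => frF c u (tr j tau)), wake, parent. split; [|exact Hb].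
    split; auto.
    + intros i t Hi Ht Hle. rewrite V3; auto. unfold init. apply frFG; auto.
    + intros i s t Hi Hs Ht. rewrite frF_dist; auto.
    + intros i Hi. rewrite V7; auto. unfold init. apply frFG; auto.
Qed.
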